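(* Let $(X,\mathcal{M})$ and $(U,\mathcal{U})$ be analytic measurable spaces, and let $\mathcal{A}\subseteq\mathcal{M}$ be a $\sigma$-algebra on $X$ and $\mathcal{F},\mathcal{G}\subseteq\mathcal{U}$ be $\sigma$-algebras on $U$. Assume that $\mathcal{A}$, $\mathcal{F}\cap\mathcal{G}$ and $(\mathcal{A}\otimes\mathcal{F})\cap(\mathcal{A}\otimes\mathcal{G})$ are countably generated. Then the following are equivalent: (i) $(\mathcal{A}\otimes\mathcal{F})\cap(\mathcal{A}\otimes\mathcal{G})=\mathcal{A}\otimes(\mathcal{F}\cap\mathcal{G})$; (ii) every atom of $(\mathcal{A}\otimes\mathcal{F})\cap(\mathcal{A}\otimes\mathcal{G})$ is a Cartesian product $B\times D$ with $B\subseteq X$, $D\subseteq U$.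
   Context: A $\sigma$-algebra is countably generated if it is generated by an at most countable family of sets. A measurable space $(X,\mathcal{M})$ is analytic if $X$ is isomorphic (via a bijective bimeasurable map) to an analytic subset of $[0,1]$ (a subset that is the continuous image of a Polish space) with its Borel $\sigma$-algebra, $\mathcal{M}$ is countably generated and $\mathcal{M}$ contains all singletons of $X$. An atom of a $\sigma$-algebra $\mathcal{M}$ is a nonempty set $A\in\mathcal{M}$ such that no proper nonempty subset of $A$ belongs to $\mathcal{M}$. $\otimes$ denotes the product $\sigma$-algebra generated by measurable rectangles. *)

(* Defs.v *)
From HB Require Import structures.
From mathcomp Require Import all_boot all_order all_algebra.
From mathcomp Require Import all_classical all_reals all_analysis.
Set Implicit Arguments. Unset Strict Implicit. Unset Printing Implicit Defensive.
Import Order.TTheory GRing.Theory Num.Theory.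
Local Open Scope classical_set_scope.
Local Open Scope ring_scope.

Definition is_metric (R : realType) (P : Type) (d : P -> P -> R) : Prop :=
  [/\ forall x y, 0 <= d x y,
      forall x y, d x y = 0 <-> x = y,
      forall x y, d x y = d y x &
      forall x y z, d x z <= d x y + d y z].

Definition metric_complete (R : realType) (P : Type) (d : P -> P -> R) : Prop :=
  forall u : nat -> P,
    (forall e : R, 0 < e -> exists N : nat, forall m n : nat,
        (N <= m)%N -> (N <= n)%N -> d (u m) (u n) < e) ->
    exists l : P, forall e : R, 0 < e -> exists N : nat, forall n : nat,
        (N <= n)%N -> d (u n) l < e.

Definition metric_separable (R : realType) (P : Type) (d : P -> P -> R) : Prop :=
  exists D : set P, countable D /\
    forall x e, 0 < e -> exists2 y, D y & d x y < e.

Definition polish_metric (R : realType) (P : Type) (d : P -> P -> R) : Prop :=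
  [/\ is_metric d, metric_complete d & metric_separable d].

Definition metric_continuous (R : realType) (P : Type) (d : P -> P -> R)
    (g : P -> R) : Prop :=
  forall x (e : R), 0 < e -> exists2 delta : R, 0 < delta &
    forall y, d x y < delta -> `|g x - g y| < e.

Definition analytic_set (R : realType) (S : set R) : Prop :=
  exists (P : Type) (d : P -> P -> R) (g : P -> R),
    [/\ polish_metric d, metric_continuous d g & range g = S].

Definition is_sigma_algebra (X : Type) (M : set (set X)) : Prop :=
  sigma_algebra setT M.

Definition countably_generated (X : Type) (M : set (set X)) : Prop :=
  exists G : set (set X), countable G /\ M = <<s G >>.

(** Analytic measurable space (X, M): M is countably generated, contains
    singletons, and X is isomorphic (bijective bimeasurable map) to an
    analytic subset S of [0,1] with its Borel sigma-algebra (trace of the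
    Borel sets of R on S). *)
Definition analytic_mspace (R : realType) (X : Type) (M : set (set X)) : Prop :=
  [/\ is_sigma_algebra M, countably_generated M, (forall x : X, M [set x]) &
    exists (S : set R) (f : X -> R),
      [/\ analytic_set S /\ S `<=` `[0, 1],
          injective f, range f = S,
          (forall B : set R, measurable B -> M (f @^-1` B)) &
          (forall E : set X, M E -> exists2 B : set R, measurable B &
               f @` E = B `&` S)]].

Definition prod_sigma (X U : Type) (A : set (set X)) (F : set (set U))
  : set (set (X * U)) :=
  <<s [set C | exists A1 F1, [/\ A A1, F F1 & C = A1 `*` F1]] >>.

Definition is_atom (T : Type) (H : set (set T)) (C : set T) : Prop :=
  [/\ H C, C !=set0 &
      forall B, H B -> B `<=` C -> B = set0 \/ B = C].

(* Main.v *)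
Require Import Defs.
From mathcomp Require Import all_boot all_order all_algebra.
From mathcomp Require Import all_classical all_reals all_analysis.
From mathcomp Require Import lra.
Import Order.TTheory GRing.Theory Num.Theory.
Local Open Scope classical_set_scope.
Section SA.
Context {T : Type} {S : set (set T)} (hS : sigma_algebra setT S).
Lemma sa0 : S set0. Proof. by case: hS. Qed.
Lemma saC A : S A -> S (~` A). Proof. by case: hS => _ h _ /h; rewrite setTD. Qed.
Lemma saT : S setT. Proof. by rewrite -setC0; apply: saC; exact: sa0. Qed.
Lemma saUn (A : nat -> set T) : (forall n, S (A n)) -> S (\bigcup_n A n).
Proof. by case: hS => _ _; apply. Qed.
Lemma saIn (A : nat -> set T) : (forall n, S (A n)) -> S (\bigcap_n A n).
Proof. move=> h; rewrite -[X in S X]setCK setC_bigcap; apply/saC/saUn => n; exact/saC. Qed.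
Lemma saU A B : S A -> S B -> S (A `|` B).
Proof. move=> hA hB; rewrite -bigcup2E; apply: saUn => -[|[|n]] //=; exact: sa0. Qed.
Lemma saI A B : S A -> S B -> S (A `&` B).
Proof. move=> hA hB; rewrite -[X in S X]setCK setCI; apply/saC/saU; exact/saC. Qed.
End SA.

Definition cantor := nat -> bool.
Definition agree (a b : cantor) m := forall i, (i < m)%N -> a i = b i.
Definition closedC (C : set cantor) :=
  forall a, (forall m, exists b, C b /\ agree a b m) -> C a.
Definition dep (C : set cantor) m := forall a b, agree a b m -> C a -> C b.

Lemma dep_closed C m : dep C m -> closedC C.
Proof.
move=> h a /(_ m) [b [Cb ab]]; apply: (h b a) Cb => i im; by rewrite (ab i im).
Qed.

Lemma closedC_all {I : Type} (C : I -> set cantor) :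
  (forall i, closedC (C i)) -> closedC [set a | forall i, C i a].
Proof.
move=> h a ha i; apply: h => m; have [b [Cb ab]] := ha m; exists b; split => //.
Qed.

Lemma closedC_imp (P : Prop) C : closedC C -> closedC [set a | P -> C a].
Proof. by move=> h a ha p; apply: h => m; have [b [Cb ab]] := ha m; exists b; split => //; apply: Cb. Qed.

Lemma closedC0 : closedC set0.
Proof. by move=> a /(_ 0%N) [b []]. Qed.

Lemma closedCT : closedC setT.
Proof. by []. Qed.

Definition upd (b : cantor) m (v : bool) : cantor := fun i => if i == m then v else b i.

Lemma agree_upd b c m v : agree b c m -> c m = v -> agree (upd b m v) c m.+1.
Proof.
move=> bc cv i; rewrite ltnS leq_eqVlt => /orP[/eqP->|im]; rewrite /upd.
  by rewrite eqxx.
by rewrite (ltn_eqF im) bc.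
Qed.

Lemma cantor_compact (D : nat -> set cantor) :
  (forall k, closedC (D k)) -> (forall k, D k !=set0) ->
  (forall k l, (k <= l)%N -> D l `<=` D k) -> exists a, forall k, D k a.
Proof.
move=> cD nD mD.
pose good (b : cantor) m := forall k, exists c, D k c /\ agree b c m.
pose next (b : cantor) m :=
  if pselect (good (upd b m true) m.+1) then upd b m true else upd b m false.
have goodnext : forall b m, good b m -> good (next b m) m.+1.
  move=> b m gb; rewrite /next; case: pselect => // ngt.
  have [k1 hk1] : exists k1, ~ exists c, D k1 c /\ agree (upd b m true) c m.+1.
    by apply: contrapT => h; apply: ngt => k; apply: contrapT => h2; apply: h; exists k.
  move=> k; have [c [Dc bc]] := gb (maxn k k1).
  exists c; split; first by apply: mD Dc; rewrite leq_maxl.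
  apply: agree_upd => //; case cm: (c m) => //; exfalso.
  apply: hk1; exists c; split; first by apply: mD Dc; rewrite leq_maxr.
  exact: agree_upd.
pose fix bs m := if m is m'.+1 then next (bs m') m' else (fun _ => false).
have gbs : forall m, good (bs m) m.
  elim=> [|m ih] /=; last exact: goodnext.
  move=> k; case: (nD k) => c Dc; exists c; split => //.
have stab1 : forall m i, (i < m)%N -> bs m.+1 i = bs m i.
  move=> m i im /=; rewrite /next; by destruct (pselect _); rewrite /upd /= (ltn_eqF im).
have stab : forall m l i, (i < m)%N -> (m <= l)%N -> bs l i = bs m i.
  move=> m l i im; elim: l => [|l ih]; first by rewrite leqn0 => /eqP ->.
  rewrite leq_eqVlt => /orP[/eqP <-//|]; rewrite ltnS => ml.
  by rewrite stab1 ?ih //; apply: leq_trans ml.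
exists (fun i => bs i.+1 i) => k; apply: cD => m.
have [c [Dc bc]] := gbs m k; exists c; split => // i im.
by rewrite -(bc i im) (stab i.+1 m i).
Qed.
Lemma mkseq_ext (f g : nat -> nat) l :
  (forall j, (j < l)%N -> f j = g j) -> mkseq f l = mkseq g l.
Proof.
elim: l => [//|l ih] h; rewrite !mkseqS ih ?h // => j jl; apply: h.
exact: ltnW.
Qed.

Lemma take_mkseq (f : nat -> nat) j k : (j <= k)%N -> take j (mkseq f k) = mkseq f j.
Proof.
elim: k => [|k ih]; first by rewrite leqn0 => /eqP ->.
rewrite leq_eqVlt => /orP[/eqP ->|]; first by rewrite take_oversize // size_mkseq.
rewrite ltnS => jk; rewrite mkseqS -cats1 takel_cat ?size_mkseq // ih //.
Qed.

Lemma mkseq_cons (f : nat -> nat) k :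
  mkseq f k.+1 = f 0%N :: mkseq (fun i => f i.+1) k.
Proof.
elim: k => [//|k ih]; by rewrite mkseqS ih rcons_cons -mkseqS.
Qed.

Lemma bound_fun (f : nat -> nat) l : exists k, forall j, (j < l)%N -> (f j < k)%N.
Proof.
elim: l => [|l [k hk]]; first by exists 0%N.
exists (maxn k (f l).+1) => j; rewrite ltnS leq_eqVlt => /orP[/eqP ->|jl].
  by rewrite leq_max leqnn orbT.
by rewrite leq_max hk.
Qed.

Definition cyl n (v : bool) : set cantor := [set a | a n = v].
Definition Sig : set (set cantor) := <<s [set C | exists n v, C = cyl n v] >>.
Lemma Sig_sa : sigma_algebra setT Sig.
Proof. exact: smallest_sigma_algebra. Qed.
Lemma Sig_cyl n v : Sig (cyl n v).
Proof. by apply: sub_sigma_algebra; exists n, v. Qed.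

Lemma upd_id (a : cantor) m : upd a m (a m) = a.
Proof. by apply/funext => i; rewrite /upd; case: eqP => // ->. Qed.

Lemma agree_upd2 a b m v : agree a b m -> agree (upd a m v) (upd b m v) m.+1.
Proof.
move=> ab i; rewrite ltnS leq_eqVlt => /orP[/eqP ->|im]; rewrite /upd ?eqxx //.
by rewrite (ltn_eqF im) ab.
Qed.

Lemma dep_Sig m C : dep C m -> Sig C.
Proof.
elim: m C => [|m ih] C dC.
  have [[a Ca]|nC] := pselect (C !=set0).
    have -> : C = setT by apply/seteqP; split => // b _; apply: (dC a b) Ca.
    exact: (saT Sig_sa).
  have -> : C = set0 by apply/seteqP; split => // b Cb; apply: nC; exists b.
  exact: (sa0 Sig_sa).
have dv : forall v, dep [set a | C (upd a m v)] m.
  move=> v a b ab; apply: dC; exact: agree_upd2.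
have -> : C = (cyl m true `&` [set a | C (upd a m true)]) `|`
              (cyl m false `&` [set a | C (upd a m false)]).
  apply/seteqP; split => a.
    move=> Ca; case am: (a m); [left|right]; split => //=; by rewrite -am upd_id.
  by case=> -[/= am]; rewrite -am upd_id.
apply: (saU Sig_sa); apply: (saI Sig_sa); try apply: Sig_cyl; exact: ih.
Qed.

Lemma closed_Sig C : closedC C -> Sig C.
Proof.
move=> cC.
have -> : C = \bigcap_m [set a | exists b, C b /\ agree a b m].
  apply/seteqP; split => [a Ca m _|a h]; first by exists a.
  by apply: cC => m; apply: h.
apply: (saIn Sig_sa) => m; apply: (@dep_Sig m) => a b ab [c [Cc ac]].
by exists c; split => // i im; rewrite -ac // ab.
Qed.

Lemma dep_closedC C m : dep C m -> closedC C.
Proof. exact: dep_closed. Qed.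

Lemma closedC_I C D : closedC C -> closedC D -> closedC (C `&` D).
Proof.
move=> cC cD; have -> : C `&` D = [set a | forall b : bool, (if b then C else D) a].
  by apply/seteqP; split => [a [Ca Da] []|a h] //; split; [exact: (h true)|exact: (h false)].
by apply: closedC_all => -[].
Qed.

Definition cmp (z : cantor) (r : nat -> nat) : cantor := fun i => z (r i).

Definition Asch (F : seq nat -> set cantor) : set cantor :=
  [set a | exists sg : nat -> nat, forall k, F (mkseq sg k) a].
Definition Aset (Z : set cantor) :=
  exists F, (forall s, closedC (F s)) /\ Z = Asch F.
Definition mono (F : seq nat -> set cantor) :=
  forall s j, (j <= size s)%N -> F s `<=` F (take j s).

Lemma Aset_mono Z : Aset Z ->
  exists F, [/\ forall s, closedC (F s), mono F & Z = Asch F].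
Proof.
move=> [F [cF ->]].
exists (fun s => [set a | forall j, (j <= size s)%N -> F (take j s) a]); split.
- by move=> s; apply: closedC_all => j; apply: closedC_imp.
- move=> s j js a h j' j'j; rewrite size_take in j'j.
  rewrite take_takel; [apply: h|]; apply: (leq_trans j'j); by rewrite ?geq_minl ?geq_minr.
- apply/seteqP; split => a [sg h]; exists sg => k.
    by move=> j; rewrite size_mkseq => jk; rewrite take_mkseq.
  by have := h k k; rewrite size_mkseq take_mkseq //; apply.
Qed.

Lemma Aset_closed C : closedC C -> Aset C.
Proof.
move=> cC; exists (fun _ => C); split => //.
by apply/seteqP; split => [a Ca|a [sg h]]; [exists (fun _ => 0%N)|exact: (h 0%N)].
Qed.

Lemma Aset_bigcup (Z : nat -> set cantor) :
  (forall n, Aset (Z n)) -> Aset (\bigcup_n Z n).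
Proof.
move=> h; have [Fs hF] := choice h.
exists (fun s => if s is n :: s' then Fs n s' else setT); split.
  by case=> [|n s] //; case: (hF n).
apply/seteqP; split => a.
  move=> [n _]; rewrite (proj2 (hF n)) => -[sg hs].
  exists (fun k => if k is k'.+1 then sg k' else n) => -[|k]; first done.
  rewrite (mkseq_cons _ k). exact: hs.
move=> [sg hs]; exists (sg 0%N) => //; rewrite (proj2 (hF _)).
exists (fun i => sg i.+1) => k; specialize (hs k.+1); rewrite mkseq_cons in hs; exact hs.
Qed.

Lemma Aset_bigcap (Z : nat -> set cantor) :
  (forall n, Aset (Z n)) -> Aset (\bigcap_n Z n).
Proof.
move=> h; have [Fs hF] := choice h.
exists (fun s => [set a | forall n l,
  (forall j, (j < l)%N -> (pickle (n, j) < size s)%N) ->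
  Fs n (mkseq (fun j => nth 0%N s (pickle (n, j))) l) a]); split.
  move=> s; apply: closedC_all => n; apply: closedC_all => l; apply: closedC_imp.
  by case: (hF n).
apply/seteqP; split => a.
  move=> ha.
  have /choice [sgs hsgs] : forall n, exists sg : nat -> nat,
      forall k, Fs n (mkseq sg k) a.
    by move=> n; have := ha n I; rewrite (proj2 (hF n)).
  exists (fun k => if @unpickle (prod nat nat) k is Some nj then sgs nj.1 nj.2 else 0%N).
  move=> k n l hl; rewrite size_mkseq in hl.
  rewrite (@mkseq_ext _ (sgs n)) // => j jl.
  by rewrite nth_mkseq ?hl // pickleK.
move=> [sg hs] n _; rewrite (proj2 (hF n)).
exists (fun j => sg (pickle (n, j))) => l.
have [k hk] := bound_fun (fun j => pickle (n, j)) l.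
have := hs k n l; rewrite size_mkseq => /(_ hk).
by rewrite (@mkseq_ext _ (fun j => sg (pickle (n, j)))) // => j jl; rewrite nth_mkseq ?hk.
Qed.

Lemma closedC_preim (r : nat -> nat) C : closedC C -> closedC [set a : cantor | C (cmp a r)].
Proof.
move=> cC a ha; apply: cC => m.
have [K hK] := bound_fun r m.
have [b [Cb ab]] := ha K; exists (cmp b r); split => // i im /=.
exact: ab (hK i im).
Qed.

Lemma Aset_preim (r : nat -> nat) Z : Aset Z -> Aset [set a : cantor | Z (cmp a r)].
Proof.
move=> [F [cF ->]]; exists (fun s => [set a : cantor | F s (cmp a r)]); split => //.
by move=> s; apply: closedC_preim.
Qed.

Definition img (r : nat -> nat) (Z : set cantor) : set cantor :=
  [set a | exists z, Z z /\ a = cmp z r].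

Lemma closedC_eqr (r : nat -> nat) (a : cantor) : closedC [set z | cmp z r = a].
Proof.
have -> : [set z | cmp z r = a] = [set z | forall i, [set z : cantor | z (r i) = a i] z].
  apply/seteqP; split => [z <- //|z h]; by apply/funext => i; apply: h.
apply: closedC_all => i; apply: (@dep_closedC _ (r i).+1) => z w zw /= <-.
by rewrite zw.
Qed.

Lemma closedC_img (r : nat -> nat) C : closedC C -> closedC (img r C).
Proof.
move=> cC a ha.
have [z hz] : exists z, forall m, (fun m => [set z | C z /\ agree a (cmp z r) m]) m z.
  apply: cantor_compact.
  - move=> m; apply: closedC_I => //.
    have [K hK] := bound_fun r m.
    apply: (@dep_closedC _ K) => z w zw h i im; rewrite /cmp -zw; [exact: h|exact: hK].
  - move=> m; have [b [[z [Cz ->]] ab]] := ha m; by exists z.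
  - move=> k l kl z [Cz h]; split => // i ik; apply: h; exact: leq_trans kl.
exists z; split; first by case: (hz 0%N).
apply/funext => i; by case: (hz i.+1) => _ /(_ i (ltnSn i)).
Qed.

Lemma Aset_img (r : nat -> nat) Z : Aset Z -> Aset (img r Z).
Proof.
move=> /Aset_mono [F [cF mF ->]].
exists (fun s => img r (F s)); split; first by move=> s; apply: closedC_img.
apply/seteqP; split => a.
  by move=> [z [[sg hz] ->]]; exists sg => k; exists z.
move=> [sg hs].
have [z hz] : exists z, forall k, (fun k => [set z | F (mkseq sg k) z /\ cmp z r = a]) k z.
  apply: cantor_compact.
  - by move=> k; apply: closedC_I => //; apply: closedC_eqr.
  - by move=> k; have [z [Fz ->]] := hs k; exists z.
  - move=> k l kl z [Fz zr]; split => //.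
    by rewrite -(@take_mkseq sg k l kl); apply: mF => //; rewrite size_mkseq.
exists z; split; last by case: (hz 0%N).
by exists sg => k; case: (hz k).
Qed.

Lemma Aset_Sig C : Sig C -> Aset C /\ Aset (~` C).
Proof.
have : Sig `<=` [set C | Aset C /\ Aset (~` C)].
  apply: smallest_sub.
    split.
    - by split; [apply: Aset_closed; exact: closedC0|rewrite setC0; exact: Aset_closed].
    - by move=> A [h1 h2]; rewrite /= setTD setCK.
    - move=> A hA; split; first by apply: Aset_bigcup => n; case: (hA n).
      by rewrite setC_bigcup; apply: Aset_bigcap => n; case: (hA n).
  move=> _ [n [v ->]]; split; apply: Aset_closed; apply: (@dep_closedC _ n.+1).
    by move=> a b ab; rewrite /cyl /= (ab n (ltnSn n)).
  by move=> a b ab; rewrite /cyl /= (ab n (ltnSn n)).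
by move=> h /h.
Qed.
Definition Sep (Z1 Z2 : set cantor) :=
  exists C, [/\ Sig C, Z1 `<=` C & C `&` Z2 `<=` set0].

Lemma Sep_bigcup (Z1 Z2 : nat -> set cantor) :
  (forall n m, Sep (Z1 n) (Z2 m)) -> Sep (\bigcup_n Z1 n) (\bigcup_m Z2 m).
Proof.
move=> h.
have [Cs hC] := choice (fun nm : nat * nat => h nm.1 nm.2).
exists (\bigcup_n \bigcap_m Cs (n, m)); split.
- apply: (saUn Sig_sa) => n; apply: (saIn Sig_sa) => m; by case: (hC (n, m)).
- move=> a [n _ Za]; exists n => // m _; case: (hC (n, m)) => _ /(_ a Za) //.
- move=> a [[n _ hn] [m _ Za]]; case: (hC (n, m)) => _ _ /(_ a); apply; split => //.
  exact: hn.
Qed.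

Definition Zs (F : seq nat -> set cantor) (s : seq nat) : set cantor :=
  [set a | exists sg, mkseq sg (size s) = s /\ forall k, F (mkseq sg k) a].

Lemma Zs_nil F : Zs F [::] = Asch F.
Proof.
by apply/seteqP; split => a [sg h]; exists sg => //; case: h.
Qed.

Lemma Zs_split F s : Zs F s = \bigcup_n Zs F (rcons s n).
Proof.
apply/seteqP; split => a.
  move=> [sg [hs h]]; exists (sg (size s)) => //; exists sg; split => //.
  by rewrite size_rcons mkseqS hs.
move=> [n _ [sg [hs h]]]; exists sg; split => //.
by move: hs; rewrite size_rcons mkseqS => /rcons_inj [].
Qed.

Lemma Zs_sub F s : Zs F s `<=` F s.
Proof. by move=> a [sg [hs h]]; rewrite -hs; apply: h. Qed.

Lemma lusin Z1 Z2 : Aset Z1 -> Aset Z2 -> Z1 `&` Z2 `<=` set0 -> Sep Z1 Z2.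
Proof.
move=> /Aset_mono [F1 [cF1 mF1 ->]] /Aset_mono [F2 [cF2 mF2 ->]] dis.
apply: contrapT => nS.
have step : forall p : seq nat * seq nat, exists nm : nat * nat,
    ~ Sep (Zs F1 p.1) (Zs F2 p.2) ->
    ~ Sep (Zs F1 (rcons p.1 nm.1)) (Zs F2 (rcons p.2 nm.2)).
  move=> p; have [np|sp] := pselect (Sep (Zs F1 p.1) (Zs F2 p.2)).
    by exists (0%N, 0%N).
  apply: contrapT => h; apply: sp; rewrite (Zs_split F1) (Zs_split F2).
  apply: Sep_bigcup => n m; apply: contrapT => hnm; apply: h.
  by exists (n, m).
have [st hst] := choice step.
pose fix pr k := if k is k'.+1 then
   (rcons (pr k').1 (st (pr k')).1, rcons (pr k').2 (st (pr k')).2)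
  else ([::], [::]).
pose sg j := nth 0%N (pr j.+1).1 j.
pose ts j := nth 0%N (pr j.+1).2 j.
have prE : forall k, pr k = (mkseq sg k, mkseq ts k).
  elim=> [//|k ih]; rewrite !mkseqS /sg /ts /= ih /=.
  by rewrite !nth_rcons !size_mkseq ltnn eqxx.
have nSk : forall k, ~ Sep (Zs F1 (mkseq sg k)) (Zs F2 (mkseq ts k)).
  elim=> [|k ih]; first by rewrite /= !Zs_nil.
  have := hst (pr k); rewrite prE /= => /(_ ih).
  have := prE k.+1; rewrite /= prE /= => -[<- <-]; done.
have [hne|] := pselect (forall k, (F1 (mkseq sg k) `&` F2 (mkseq ts k)) !=set0).
  have hmono : forall k l, (k <= l)%N ->
      F1 (mkseq sg l) `&` F2 (mkseq ts l) `<=` F1 (mkseq sg k) `&` F2 (mkseq ts k).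
    move=> k l kl a [h1 h2]; split.
      by rewrite -(@take_mkseq sg k l kl); apply: mF1 => //; rewrite size_mkseq.
    by rewrite -(@take_mkseq ts k l kl); apply: mF2 => //; rewrite size_mkseq.
  have [a ha] := @cantor_compact (fun k => F1 (mkseq sg k) `&` F2 (mkseq ts k))
    (fun k => @closedC_I _ _ (cF1 _) (cF2 _)) hne hmono.
  apply: (dis a); split.
    by exists sg => k; case: (ha k).
  by exists ts => k; case: (ha k).
move=> /existsNP [k hk]; apply: (nSk k).
exists (F1 (mkseq sg k)); split.
- exact: closed_Sig.
- exact: Zs_sub.
- move=> a [h1 /Zs_sub h2]; apply: hk; by exists a.
Qed.
Lemma Aset_I2 A B : Aset A -> Aset B -> Aset (A `&` B).
Proof.
move=> hA hB.
have -> : A `&` B = \bigcap_n (if n is 0%N then A else B).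
  apply/seteqP; split => [a [Aa Ba] [|n] _ //|a h].
  by split; [exact: (h 0%N I)|exact: (h 1%N I)].
by apply: Aset_bigcap => -[|n].
Qed.

Lemma Aset_U2 A B : Aset A -> Aset B -> Aset (A `|` B).
Proof.
move=> hA hB; rewrite -bigcup2E; apply: Aset_bigcup => -[|[|n]] //=.
exact/Aset_closed/closedC0.
Qed.

Lemma Sig_preim (r : nat -> nat) C : Sig C -> Sig [set a : cantor | C (cmp a r)].
Proof.
have : Sig `<=` [set C | Sig [set a : cantor | C (cmp a r)]].
  apply: smallest_sub.
    split.
    - exact: (sa0 Sig_sa).
    - move=> A hA; rewrite setTD; by have := saC Sig_sa _ hA.
    - move=> A hA; by have := saUn Sig_sa _ hA.
  move=> _ [n [v ->]]; exact: Sig_cyl.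
by move=> h /h.
Qed.

Definition evn (i : nat) : nat := i.*2.
Definition odn (i : nat) : nat := i.*2.+1.
Definition itl (b a : cantor) : cantor := fun i => if odd i then a i./2 else b i./2.

Lemma cmp_itl_ev b a : cmp (itl b a) evn = b.
Proof. by apply/funext => i; rewrite /cmp /itl /evn odd_double doubleK. Qed.
Lemma cmp_itl_od b a : cmp (itl b a) odn = a.
Proof. by apply/funext => i; rewrite /cmp /itl /odn /= odd_double /= uphalf_double. Qed.
Lemma itl_eta z : itl (cmp z evn) (cmp z odn) = z.
Proof.
apply/funext => i; rewrite /cmp /itl /evn /odn.
by case: (boolP (odd i)) => oi; congr z; rewrite -[RHS]odd_double_half ?oi ?(negbTE oi).
Qed.

Lemma Aset_code (Cs : nat -> set cantor) Z : (forall n, Sig (Cs n)) -> Aset Z ->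
  Aset [set b | exists a, Z a /\ b = fun n => `[< Cs n a >]].
Proof.
move=> hC hZ.
pose W := [set z | Z (cmp z odn)] `&` \bigcap_n
  ((cyl (evn n) true `&` [set z : cantor | Cs n (cmp z odn)]) `|`
   (cyl (evn n) false `&` [set z : cantor | (~` Cs n) (cmp z odn)])).
have -> : [set b | exists a, Z a /\ b = fun n => `[< Cs n a >]] = img evn W.
  apply/seteqP; split => b.
    move=> [a [Za ->]]; exists (itl (fun n => `[< Cs n a >]) a); split.
      split; first by rewrite /= cmp_itl_od.
      move=> n _; rewrite /= cmp_itl_od /cyl /= /itl /evn odd_double doubleK.
      by case: asboolP => h; [left|right]; split.
    by rewrite cmp_itl_ev.
  move=> [z [[Zz hz] ->]]; exists (cmp z odn); split => //.
  apply/funext => n; have := hz n I; rewrite /cyl /cmp /=.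
  by case=> -[-> h]; case: asboolP.
apply: Aset_img; apply: Aset_I2; first exact: Aset_preim.
apply: Aset_bigcap => n; apply: Aset_U2; apply: Aset_I2.
- by apply: Aset_closed; apply: (@dep_closedC _ (evn n).+1) => a b ab; rewrite /cyl /= (ab _ (ltnSn _)).
- exact: (Aset_preim odn _ (Aset_Sig _ (hC n)).1).
- by apply: Aset_closed; apply: (@dep_closedC _ (evn n).+1) => a b ab; rewrite /cyl /= (ab _ (ltnSn _)).
- exact: (Aset_preim odn _ (Aset_Sig _ (hC n)).2).
Qed.
Section Polish.
Context {R : realType}.
Local Open Scope ring_scope.

Definition qs (i : nat) : R := ratr (odflt 0%R (@unpickle rat i)).
Definition codeR (r : R) : cantor := fun i => r < qs i.
Definition ep (k : nat) : R := (2 ^+ k)^-1.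

Lemma ep_gt0 k : 0 < ep k.
Proof. by rewrite invr_gt0 exprn_gt0. Qed.

Lemma epS k : ep k.+1 = ep k / 2.
Proof. by rewrite /ep exprS invfM mulrC. Qed.

Lemma ep_le k l : (k <= l)%N -> ep l <= ep k.
Proof.
elim: l => [|l ih]; first by rewrite leqn0 => /eqP ->.
rewrite leq_eqVlt => /orP[/eqP -> //|]; rewrite ltnS => /ih h.
rewrite epS; have := ep_gt0 l; lra.
Qed.

Lemma ep_small e : 0 < e -> exists k, ep k < e.
Proof.
move=> e0; have [k hk] := ltr_add_invr e0; exists k.
apply: le_lt_trans hk; rewrite add0r /ep lef_pV2 ?posrE ?exprn_gt0 //.
by rewrite -natrX ler_nat ltn_expl.
Qed.

Lemma dense_seq (P : Type) (d : P -> P -> R) (p0 : P) : metric_separable d ->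
  exists e : nat -> P, forall x eps, 0 < eps -> exists n, d x (e n) < eps.
Proof.
move=> [D [cD dD]]; move/pfcard_geP: cD => [D0|/surjfunPex [f Df]].
  have [y Dy _] := dD p0 1 ltr01; by rewrite D0 in Dy.
exists f => x eps eps0; have [y Dy hy] := dD x eps eps0.
by rewrite Df in Dy; case: Dy => n _ fy; exists n; rewrite fy.
Qed.

Lemma Aset_polish (P : Type) (d : P -> P -> R) (g : P -> R) :
  polish_metric d -> metric_continuous d g ->
  Aset [set a | exists p, a = codeR (g p)].
Proof.
move=> [[d0 dz dsym dtri] dcomp dsep] gc.
have [[p0 _]|nP] := pselect (exists p : P, True); last first.
  have -> : [set a | exists p, a = codeR (g p)] = set0.
    by apply/seteqP; split => // a [p _]; apply: nP; exists p.
  exact/Aset_closed/closedC0.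
have [e he] := @dense_seq P d p0 dsep.
pose dn v := odflt (0%N, 0%N) (@unpickle (prod nat nat) v).
pose F (s : seq nat) := [set a : cantor | (0 < size s)%N ->
   (forall j, (j.+1 < size s)%N ->
      d (e (dn (nth 0%N s j)).1) (e (dn (nth 0%N s j.+1)).1) < ep j) /\
   (forall i, (i < size s)%N ->
      (a i -> exists y, d (e (dn (nth 0%N s (size s).-1)).1) y <= 2 * ep (size s).-1
              /\ g y <= qs i - ((dn (nth 0%N s i)).2.+1%:R)^-1) /\
      (~~ a i -> exists y, d (e (dn (nth 0%N s (size s).-1)).1) y <= 2 * ep (size s).-1
              /\ qs i <= g y))].
exists F; split.
  move=> s; apply: (@dep_closedC _ (size s)) => a b ab h hs.
  have [h1 h2] := h hs; split => // i iS; rewrite -(ab i iS); exact: h2.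
apply/seteqP; split => a.
- move=> [p ->].
  have [nk hnk] : {nk : nat -> nat & forall k, d p (e (nk k)) < ep k.+2}.
    exact: (choice (fun k => he p _ (ep_gt0 k.+2))).
  have [mi hmi] : {mi : nat -> nat & forall i, g p < qs i -> g p <= qs i - ((mi i).+1%:R)^-1}.
    apply: (@choice nat nat (fun i mm => g p < qs i -> g p <= qs i - (mm.+1%:R)^-1)); move=> i; have [gi|ngi] := boolP (g p < qs i); last by exists 0%N.
    have [m hm] := ltr_add_invr gi; exists m => _; move: hm; generalize (m.+1%:R^-1 : R) => t; lra.
  exists (fun k => pickle (nk k, mi k)) => K; rewrite /F /= size_mkseq => K0.
  have nthE : forall j, (j < K)%N -> dn (nth 0%N (mkseq (fun k => pickle (nk k, mi k)) K) j) = (nk j, mi j).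
    by move=> j jK; rewrite nth_mkseq // /dn pickleK.
  have K1 : (K.-1 < K)%N by rewrite prednK.
  split.
    move=> j jK; rewrite !nthE //; last exact: ltnW.
    have := dtri (e (nk j)) p (e (nk j.+1)); have := dsym (e (nk j)) p.
    have := hnk j; have := hnk j.+1; rewrite !epS; have := ep_gt0 j; lra.
  move=> i iK; rewrite !nthE //=; split => [gi|ngi]; exists p; split.
  + have := dsym p (e (nk K.-1)); have := hnk K.-1; rewrite !epS; have := ep_gt0 K.-1; lra.
  + exact: hmi.
  + have := dsym p (e (nk K.-1)); have := hnk K.-1; rewrite !epS; have := ep_gt0 K.-1; lra.
  + by rewrite leNgt.
- move=> [sg hs].
  pose n j := (dn (sg j)).1; pose m j := (dn (sg j)).2.
  have valid : forall j, d (e (n j)) (e (n j.+1)) < ep j.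
    move=> j; have := hs j.+2; rewrite /F size_mkseq => /(_ isT) [+ _].
    by move=> /(_ j (ltnSn _)); rewrite !nth_mkseq.
  have cauchy : forall j l, (j <= l)%N -> d (e (n j)) (e (n l)) <= 2 * ep j - 2 * ep l.
    move=> j; elim=> [|l ih].
      rewrite leqn0 => /eqP ->; have -> : d (e (n 0%N)) (e (n 0%N)) = 0 by apply/dz.
      by rewrite subrr.
    rewrite leq_eqVlt => /orP[/eqP <-|].
      have -> : d (e (n j)) (e (n j)) = 0 by apply/dz.
      by rewrite subrr.
    rewrite ltnS => /ih h; have := dtri (e (n j)) (e (n l)) (e (n l.+1)).
    have := valid l; rewrite epS; lra.
  have [p hp] : exists p, forall eps, 0 < eps -> exists N, forall k, (N <= k)%N ->
      d (e (n k)) p < eps.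
    apply: (dcomp (fun k => e (n k))) => eps eps0.
    have [N hN] : exists N, ep N < eps / 4 by apply: ep_small; lra.
    exists N => k l Nk Nl.
    have := dtri (e (n k)) (e (n N)) (e (n l)); have := dsym (e (n k)) (e (n N)).
    have := cauchy _ _ Nk; have := cauchy _ _ Nl; have := ep_gt0 k; have := ep_gt0 l.
    lra.
  have dlim : forall j, d (e (n j)) p <= 2 * ep j.
    move=> j; apply/ler_addgt0Pr => eps eps0.
    have [N hN] := hp eps eps0.
    have := dtri (e (n j)) (e (n (maxn j N))) p.
    have := hN _ (leq_maxr j N); have := cauchy j _ (leq_maxl j N).
    have := ep_gt0 (maxn j N); lra.
  exists p; apply/funext => i.
  have key : forall eps, 0 < eps -> exists y, `|g p - g y| < eps /\
      (a i -> g y <= qs i - ((m i).+1%:R)^-1) /\ (~~ a i -> qs i <= g y).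
    move=> eps eps0; have [del del0 hdel] := gc p eps eps0.
    have [k hk] : exists k, ep k < del / 4 by apply: ep_small; lra.
    pose K := (maxn k i).+1.
    have := hs K; rewrite /F size_mkseq => /(_ isT) [_ /(_ i)].
    rewrite ltnS leq_maxr => /(_ isT).
    rewrite /= !nth_mkseq ?ltnS ?leq_maxr //.
    have dK : forall y, d (e (n (maxn k i))) y <= 2 * ep (maxn k i) -> d p y < del.
      move=> y hy; have := dtri p (e (n (maxn k i))) y; have := dsym p (e (n (maxn k i))).
      have := dlim (maxn k i); have := @ep_le _ _ (leq_maxl k i); lra.
    case ai: (a i) => -[h1 h2].
      have [y [hy1 hy2]] := h1 isT; exists y; split; first exact/hdel/dK.
      by split.
    have [y [hy1 hy2]] := h2 isT; exists y; split; first exact/hdel/dK.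
    by split.
  rewrite /codeR; case ai: (a i); apply/esym.
    have : g p <= qs i - ((m i).+1%:R)^-1.
      apply/ler_addgt0Pr => eps eps0; have [y [hy [h1 _]]] := key eps eps0.
      have := h1 ai; have := ltr_distlDr hy; generalize ((m i).+1%:R^-1 : R) => t; lra.
    have : 0 < ((m i).+1%:R : R)^-1 by rewrite invr_gt0 ltr0Sn.
    move=> h1 h2; apply: le_lt_trans h2 _; by rewrite ltrBlDr ltrDl.
  apply/negbTE; rewrite -leNgt; apply/ler_addgt0Pr => eps eps0.
  have [y [hy [_ h2]]] := key eps eps0.
  have := h2 (negbT ai); have := ltr_distlCDr hy; lra.
Qed.

End Polish.
Lemma gen_sat {T : Type} (k : nat -> set T) (W : set T) : <<s range k >> W ->
  forall y y', (forall n, k n y <-> k n y') -> (W y <-> W y').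
Proof.
move=> hW y y' hyy.
have : <<s range k >> `<=` [set W | W y <-> W y'].
  apply: smallest_sub; last by move=> _ [n _ <-]; exact: hyy.
  split.
  - by [].
  - move=> B hB; rewrite setTD /=; split => h1 h2; apply: h1; exact/hB.
  - move=> B hB; split => -[n _ h]; exists n => //; exact/(hB n).
by move=> /(_ W hW).
Qed.

Definition codek {T : Type} (k : nat -> set T) (y : T) : cantor := fun n => `[< k n y >].

Lemma gen_preim_code {T : Type} (k : nat -> set T) C : Sig C ->
  <<s range k >> [set y | C (codek k y)].
Proof.
have : Sig `<=` [set C | <<s range k >> [set y | C (codek k y)]].
  apply: smallest_sub.
    split.
    - rewrite /=; have -> : [set y : T | @set0 cantor (codek k y)] = set0 by apply/seteqP; split.
      exact: sigma_algebra0.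
    - move=> B hB; rewrite /=.
      have -> : [set y | (setT `\` B) (codek k y)] = setT `\` [set y | B (codek k y)].
        by apply/seteqP; split => y /=.
      exact: sigma_algebraCD.
    - move=> B hB; rewrite /=.
      have -> : [set y | (\bigcup_n B n) (codek k y)] = \bigcup_n [set y | B n (codek k y)].
        by apply/seteqP; split => y /=.
      exact: sigma_algebra_bigcup.
  move=> _ [n [v ->]] /=.
  case: v.
    have -> : [set y | cyl n true (codek k y)] = k n.
      apply/seteqP; split => y; rewrite /cyl /codek /=; first by move/asboolP.
      by move=> h; apply/asboolP.
    by apply: sub_sigma_algebra; exists n.
  have -> : [set y | cyl n false (codek k y)] = setT `\` k n.
    apply/seteqP; split => y; rewrite /cyl /codek /=; first by move/negbT/asboolPn.
    by move=> [_ h]; apply/negbTE/asboolPn.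
  by apply: sigma_algebraCD; apply: sub_sigma_algebra; exists n.
by move=> h /h.
Qed.

Lemma enum_gen {T : Type} (G S : set (set T)) : countable G ->
  sigma_algebra setT S -> G `<=` S ->
  exists k : nat -> set T, (forall n, S (k n)) /\ G `<=` range k.
Proof.
move=> /pfcard_geP [->|/surjfunPex [f Gf]] sS GS.
  by exists (fun _ => set0); split => //; move=> n; exact: (sa0 sS).
exists f; split; last by rewrite Gf.
by move=> n; apply: GS; rewrite Gf; exists n.
Qed.

Lemma gen_eq {T : Type} (G S : set (set T)) (k : nat -> set T) :
  S = <<s G >> -> (forall n, S (k n)) -> G `<=` range k -> S = <<s range k >>.
Proof.
move=> SG kS Gk; apply/seteqP; split.
  by rewrite SG; apply: sub_sigma_algebra2.
apply: smallest_sub; last by move=> _ [n _ <-].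
by rewrite SG; exact: smallest_sigma_algebra.
Qed.

Lemma sec1 {X U : Type} (A : set (set X)) (F : set (set U)) :
  sigma_algebra setT A -> forall W, prod_sigma A F W -> forall u, A [set x | W (x, u)].
Proof.
move=> sA W hW u.
have : prod_sigma A F `<=` [set W | A [set x | W (x, u)]].
  apply: smallest_sub.
    split.
    - rewrite /=; have -> : [set x : X | @set0 (X * U) (x, u)] = set0 by apply/seteqP; split.
      exact: (sa0 sA).
    - move=> B hB; rewrite /=; have -> : [set x | (setT `\` B) (x, u)] = ~` [set x | B (x, u)].
        by apply/seteqP; split => x /=; [case|split].
      exact: (saC sA).
    - move=> B hB; rewrite /=; have -> : [set x | (\bigcup_n B n) (x, u)] = \bigcup_n [set x | B n (x, u)].
        by apply/seteqP; split => x /=.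
      exact: (saUn sA).
  move=> _ [A1 [F1 [hA hF ->]]] /=.
  have [Fu|nFu] := pselect (F1 u).
    by have -> : [set x | (A1 `*` F1) (x, u)] = A1 by apply/seteqP; split => x /= => [[]|].
  have -> : [set x | (A1 `*` F1) (x, u)] = set0 by apply/seteqP; split => x /= => [[]|].
  exact: (sa0 sA).
by move=> /(_ W hW).
Qed.

Lemma sec2 {X U : Type} (A : set (set X)) (F : set (set U)) :
  sigma_algebra setT F -> forall W, prod_sigma A F W -> forall x, F [set u | W (x, u)].
Proof.
move=> sF W hW x.
have : prod_sigma A F `<=` [set W | F [set u | W (x, u)]].
  apply: smallest_sub.
    split.
    - rewrite /=; have -> : [set u : U | @set0 (X * U) (x, u)] = set0 by apply/seteqP; split.
      exact: (sa0 sF).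
    - move=> B hB; rewrite /=; have -> : [set u | (setT `\` B) (x, u)] = ~` [set u | B (x, u)].
        by apply/seteqP; split => u /=; [case|split].
      exact: (saC sF).
    - move=> B hB; rewrite /=; have -> : [set u | (\bigcup_n B n) (x, u)] = \bigcup_n [set u | B n (x, u)].
        by apply/seteqP; split => u /=.
      exact: (saUn sF).
  move=> _ [A1 [F1 [hA hF ->]]] /=.
  have [Ax|nAx] := pselect (A1 x).
    by have -> : [set u | (A1 `*` F1) (x, u)] = F1 by apply/seteqP; split => u /= => [[]|].
  have -> : [set u | (A1 `*` F1) (x, u)] = set0 by apply/seteqP; split => u /= => [[]|].
  exact: (sa0 sF).
by move=> /(_ W hW).
Qed.

Lemma prod_sigma_mono {X U : Type} (A A' : set (set X)) (F F' : set (set U)) :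
  A `<=` A' -> F `<=` F' -> prod_sigma A F `<=` prod_sigma A' F'.
Proof.
move=> AA FF; apply: sub_sigma_algebra2 => _ [A1 [F1 [hA hF ->]]].
by exists A1, F1; split; [exact: AA|exact: FF|].
Qed.

Lemma blackwell {T : Type} (Phi : T -> cantor) (k : nat -> set T) (E : set T) :
  Aset (range Phi) ->
  (forall n, exists C, Sig C /\ k n = Phi @^-1` C) ->
  (exists C, Sig C /\ E = Phi @^-1` C) ->
  (forall y y', (forall n, k n y <-> k n y') -> E y -> E y') ->
  <<s range k >> E.
Proof.
move=> APhi hk [CE [SCE ECE]] sat.
have [Cs hCs] := choice hk.
have hkC : forall n y, k n y <-> Cs n (Phi y).
  by move=> n y; rewrite (proj2 (hCs n)).
pose Z1 := [set b | exists a, (range Phi `&` CE) a /\ b = fun n => `[< Cs n a >]].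
pose Z2 := [set b | exists a, (range Phi `&` ~` CE) a /\ b = fun n => `[< Cs n a >]].
have cE : forall y, codek k y = fun n => `[< Cs n (Phi y) >].
  move=> y; apply/funext => n; rewrite /codek; apply/asbool_equiv_eq; exact: hkC.
have [C [SC Z1C CZ2]] : Sep Z1 Z2.
  apply: lusin.
  - apply: Aset_code; first by move=> n; case: (hCs n).
    apply: Aset_I2 => //; exact: (Aset_Sig _ SCE).1.
  - apply: Aset_code; first by move=> n; case: (hCs n).
    apply: Aset_I2 => //; exact: (Aset_Sig _ SCE).2.
  - move=> b [[a1 [[[y1 _ <-] C1] ->]] [a2 [[[y2 _ <-] C2] e12]]].
    have Ey1 : E y1 by rewrite ECE.
    have nEy2 : ~ E y2 by rewrite ECE.
    apply: nEy2; apply: (sat y1) => // n; rewrite !hkC.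
    have h := congr1 (fun f => f n) e12; simpl in h; exact: asbool_eq_equiv h.
have -> : E = [set y | C (codek k y)].
  apply/seteqP; split => y.
    move=> Ey /=; rewrite cE; apply: Z1C; exists (Phi y); split => //; split.
      by exists y.
    by move: Ey; rewrite ECE.
  move=> Cy; apply: contrapT => nEy; apply: (CZ2 (codek k y)); split => //.
  rewrite cE; exists (Phi y); split => //; split; first by exists y.
  by move: nEy; rewrite ECE.
exact: gen_preim_code.
Qed.
Section BorelCode.
Context {R : realType}.
Local Open Scope ring_scope.

Lemma meas_G (B : set R) : measurable B -> <<s @measurable_realfun.RGenInftyO.G R >> B.
Proof.
move=> mB; have e := measurable_realfun.RGenInftyO.measurableE R.
have := congr1 (fun S => S B) e => h; exact: (eq_ind _ id mB _ h).
Qed.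

Lemma qs_pickle (q : rat) : qs (pickle q) = ratr q :> R.
Proof. by rewrite /qs pickleK. Qed.

Lemma borel_code (B : set R) : measurable B ->
  exists C, Sig C /\ forall r, B r <-> C (codeR r).
Proof.
move=> /meas_G mB.
have : <<s @measurable_realfun.RGenInftyO.G R >> `<=`
    [set B : set R | exists C, Sig C /\ forall r, B r <-> C (codeR r)].
  apply: smallest_sub.
    split.
    - by exists set0; split => //; exact: (sa0 Sig_sa).
    - move=> A [C [SC hC]]; exists (~` C); split; first exact: (saC Sig_sa).
      move=> r /=; rewrite -hC; split; [by case|by move=> h; split].
    - move=> A hA; have [Cs hCs] := choice hA.
      exists (\bigcup_n Cs n); split; first by apply: (saUn Sig_sa) => n; case: (hCs n).
      move=> r; split => -[n _ h]; exists n => //; by apply/(proj2 (hCs n)).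
  move=> _ [x ->].
  exists (\bigcup_i (if qs i < x then cyl i true else set0)); split.
    apply: (saUn Sig_sa) => i; case: ifP => _; [exact: Sig_cyl|exact: (sa0 Sig_sa)].
  move=> r; rewrite /= in_itv /=; split.
    move=> rx; have [q] := rat_in_itvoo rx; rewrite in_itv /= => /andP[rq qx].
    exists (pickle q) => //; rewrite qs_pickle qx /cyl /codeR /= qs_pickle.
    exact: rq.
  move=> [i _]; case: ifP => // qx; rewrite /cyl /codeR /= => rq.
  exact: lt_trans rq qx.
by move=> /(_ B mB).
Qed.
End BorelCode.

Lemma analytic_code (R : realType) (X : Type) (M : set (set X)) :
  analytic_mspace R M -> exists cX : X -> cantor,
    Aset (range cX) /\ forall E, M E -> exists C, Sig C /\ E = cX @^-1` C.
Proof.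
move=> [_ _ _ [S [f [[[P [d [g [pol gc rg]]]] _] finj rf fmeas fiso]]]].
exists (fun x => codeR (f x)); split.
  have -> : range (fun x => codeR (f x)) = [set a | exists p, a = codeR (g p)].
    apply/seteqP; split => a.
      move=> [x _ <-]; have : range g (f x) by rewrite rg -rf; exists x.
      by move=> [p _ gp]; exists p; rewrite gp.
    move=> [p ->]; have : range f (g p) by rewrite rf -rg; exists p.
    by move=> [x _ fx]; exists x; rewrite ?fx.
  exact: Aset_polish pol gc.
move=> E ME; have [B mB fE] := fiso E ME.
have [C [SC hC]] := @borel_code R B mB.
exists C; split => //; apply/seteqP; split => x /=.
  move=> Ex; apply/hC; have : (f @` E) (f x) by exists x.
  by rewrite fE => -[].
move=> /hC Bfx; have : (B `&` S) (f x) by split => //; rewrite -rf; exists x.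
by rewrite -fE => -[x' Ex' /finj <-].
Qed.
Lemma prod_code {X U : Type} (M : set (set X)) (UU : set (set U))
    (cX : X -> cantor) (cU : U -> cantor) :
  Aset (range cX) -> Aset (range cU) ->
  (forall E, M E -> exists C, Sig C /\ E = cX @^-1` C) ->
  (forall E, UU E -> exists C, Sig C /\ E = cU @^-1` C) ->
  Aset (range (fun y : X * U => itl (cX y.1) (cU y.2))) /\
  forall W, prod_sigma M UU W ->
    exists C, Sig C /\ W = (fun y : X * U => itl (cX y.1) (cU y.2)) @^-1` C.
Proof.
move=> AX AU hX hU; split.
  have -> : range (fun y : X * U => itl (cX y.1) (cU y.2)) =
      [set z | range cX (cmp z evn)] `&` [set z | range cU (cmp z odn)].
    apply/seteqP; split => z.
      move=> [[x u] _ <-]; split => /=.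
        by exists x => //; rewrite cmp_itl_ev.
      by exists u => //; rewrite cmp_itl_od.
    move=> [[x _ ex] [u _ eu]]; exists (x, u) => //=; by rewrite ex eu itl_eta.
  by apply: Aset_I2; apply: Aset_preim.
have : prod_sigma M UU `<=` [set W | exists C, Sig C /\
    W = (fun y : X * U => itl (cX y.1) (cU y.2)) @^-1` C].
  apply: smallest_sub.
    split.
    - by exists set0; split; [exact: (sa0 Sig_sa)|apply/seteqP; split].
    - move=> W [C [SC ->]]; exists (~` C); split; first exact: (saC Sig_sa).
      by apply/seteqP; split => y /=; [case|split].
    - move=> W hW; have [Cs hCs] := choice hW.
      exists (\bigcup_n Cs n); split; first by apply: (saUn Sig_sa) => n; case: (hCs n).
      apply/seteqP; split => y /= [n _ h]; exists n => //.
        by move: h; rewrite (proj2 (hCs n)).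
      by rewrite (proj2 (hCs n)).
  move=> _ [A1 [F1 [MA UF ->]]].
  have [C1 [S1 ->]] := hX _ MA; have [C2 [S2 ->]] := hU _ UF.
  exists ([set z | C1 (cmp z evn)] `&` [set z | C2 (cmp z odn)]); split.
    by apply: (saI Sig_sa); apply: Sig_preim.
  by apply/seteqP; split => -[x u] /=; rewrite cmp_itl_ev cmp_itl_od.
by move=> h W /h.
Qed.

Lemma sa_I2 {T : Type} (S1 S2 : set (set T)) :
  sigma_algebra setT S1 -> sigma_algebra setT S2 -> sigma_algebra setT (S1 `&` S2).
Proof.
move=> [a1 b1 c1] [a2 b2 c2]; split => //.
  by move=> A [h1 h2]; split; [exact: b1|exact: b2].
by move=> A hA; split; [apply: c1 => n; exact: (hA n).1|apply: c2 => n; exact: (hA n).2].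
Qed.

Lemma atom_rect {X U : Type} (A : set (set X)) (B : set (set U)) (C : set (X * U)) :
  sigma_algebra setT A -> sigma_algebra setT B ->
  is_atom (prod_sigma A B) C -> exists B0 D0, C = B0 `*` D0.
Proof.
move=> sA sB [KC [[x0 u0] C0] atC].
have sK : sigma_algebra setT (prod_sigma A B) by exact: smallest_sigma_algebra.
have grow : forall W, prod_sigma A B W -> forall y, C y -> W y -> C `<=` W.
  move=> W KW y Cy Wy; have := atC (C `&` W) (saI sK _ _ KC KW) (@subIsetl _ _ _).
  case=> h.
    by exfalso; have : (C `&` W) y by []; rewrite h.
  move=> z Cz; have : (C `&` W) z by rewrite h.
  by case.
exists [set x | forall a, A a -> (a x <-> a x0)], [set u | forall b, B b -> (b u <-> b u0)].
apply/seteqP; split.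
  move=> [x u] Cxu; split => /=.
    move=> a Aa.
    have Ka : prod_sigma A B (a `*` setT).
      by apply: sub_sigma_algebra; exists a, setT; split => //; exact: (saT sB).
    split => h.
      by have := grow _ Ka (x, u) Cxu (conj h I) (x0, u0) C0 => -[].
    by have := grow _ Ka (x0, u0) C0 (conj h I) (x, u) Cxu => -[].
  move=> b Bb.
  have Kb : prod_sigma A B (setT `*` b).
    by apply: sub_sigma_algebra; exists setT, b; split => //; exact: (saT sA).
  split => h.
    by have := grow _ Kb (x, u) Cxu (conj I h) (x0, u0) C0 => -[].
  by have := grow _ Kb (x0, u0) C0 (conj I h) (x, u) Cxu => -[].
move=> [x u] [/= hx hu].
have sat : prod_sigma A B `<=` [set W | forall x u x' u',
    (forall a, A a -> (a x <-> a x')) -> (forall b, B b -> (b u <-> b u')) ->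
    (W (x, u) <-> W (x', u'))].
  apply: smallest_sub.
    split.
    - by [].
    - move=> W hW x1 u1 x2 u2 ha hb /=; have := hW x1 u1 x2 u2 ha hb; tauto.
    - move=> W hW x1 u1 x2 u2 ha hb; split => -[n _ h]; exists n => //;
        by apply/(hW n x1 u1 x2 u2 ha hb).
  move=> _ [A1 [B1 [hA hB ->]]] x1 u1 x2 u2 ha hb /=.
  have := ha A1 hA; have := hb B1 hB; tauto.
apply/(sat C KC x0 u0 x u) => //.
  by move=> a Aa; have := hx a Aa; tauto.
by move=> b Bb; have := hu b Bb; tauto.
Qed.
Theorem theorem3p3 (R : realType) (X U : Type)
  (M : set (set X)) (UU : set (set U))
  (A : set (set X)) (F G : set (set U)) :
  analytic_mspace R M -> analytic_mspace R UU ->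
  is_sigma_algebra A -> A `<=` M ->
  is_sigma_algebra F -> F `<=` UU ->
  is_sigma_algebra G -> G `<=` UU ->
  countably_generated A ->
  countably_generated (F `&` G) ->
  countably_generated (prod_sigma A F `&` prod_sigma A G) ->
  (prod_sigma A F `&` prod_sigma A G = prod_sigma A (F `&` G) <->
   forall C : set (X * U), is_atom (prod_sigma A F `&` prod_sigma A G) C ->
     exists (B : set X) (D : set U), C = B `*` D).
Proof.
move=> aM aU sA AM sF FU sG GU [GA [cGA eA]] [GFG [cGFG eFG]] [GH [cGH eH]].
have sFG : sigma_algebra setT (F `&` G) by exact: sa_I2.
have sK : sigma_algebra setT (prod_sigma A (F `&` G)) by exact: smallest_sigma_algebra.
have sH : sigma_algebra setT (prod_sigma A F `&` prod_sigma A G).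
  by apply: sa_I2; exact: smallest_sigma_algebra.
have KH : prod_sigma A (F `&` G) `<=` prod_sigma A F `&` prod_sigma A G.
  apply: smallest_sub => //; move=> _ [A1 [F1 [hA [hF hG] ->]]].
  by split; apply: sub_sigma_algebra; exists A1, F1.
split.
  move=> HK C; rewrite HK => hC; exact: (atom_rect _ _ _ sA sFG hC).
move=> hat; apply/seteqP; split; last exact: KH.
set H := prod_sigma A F `&` prod_sigma A G in sH KH hat eH *.
set K := prod_sigma A (F `&` G) in sK KH *.
have [hk [hkH GHh]] : exists hk : nat -> set (X * U), (forall n, H (hk n)) /\ GH `<=` range hk.
  by apply: enum_gen => //; rewrite eH; exact: sub_sigma_algebra.
have HE : H = <<s range hk >> := gen_eq _ _ _ eH hkH GHh.
have [ka [kaA GAka]] : exists ka : nat -> set X, (forall n, A (ka n)) /\ GA `<=` range ka.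
  by apply: enum_gen => //; rewrite eA; exact: sub_sigma_algebra.
have [kb [kbB GBkb]] : exists kb : nat -> set U, (forall n, (F `&` G) (kb n)) /\ GFG `<=` range kb.
  by apply: enum_gen => //; rewrite eFG; exact: sub_sigma_algebra.
pose k n : set (X * U) := if odd n then setT `*` kb n./2 else ka n./2 `*` setT.
have KE : K = <<s range k >>.
  apply/seteqP; split; last first.
    apply: smallest_sub => // _ [n _ <-]; rewrite /k; case: (odd n).
      by apply: sub_sigma_algebra; exists setT, (kb n./2); split => //; exact: (saT sA).
    by apply: sub_sigma_algebra; exists (ka n./2), setT; split => //; exact: (saT sFG).
  have sk : sigma_algebra setT <<s range k >> by exact: smallest_sigma_algebra.
  have L1 : A `<=` [set a | <<s range k >> (a `*` setT)].
    rewrite eA; apply: smallest_sub.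
      split.
      - by rewrite /= set0X; exact: (sa0 sk).
      - move=> a ha /=.
        have -> : (setT `\` a) `*` setT = ~` (a `*` @setT U).
          by apply/seteqP; split => -[x u] /=; tauto.
        exact: (saC sk).
      - move=> a ha /=.
        have -> : (\bigcup_n a n) `*` setT = \bigcup_n (a n `*` @setT U).
          apply/seteqP; split => -[x u] /=; first by move=> [[n _ h] _]; exists n.
          by move=> [n _ [h _]]; split => //; exists n.
        exact: (saUn sk).
    move=> a /GAka [m _ <-] /=; apply: sub_sigma_algebra; exists m.*2 => //.
    by rewrite /k odd_double doubleK.
  have L2 : (F `&` G) `<=` [set b | <<s range k >> (setT `*` b)].
    rewrite eFG; apply: smallest_sub.
      split.
      - by rewrite /= setX0; exact: (sa0 sk).
      - move=> b hb /=.
        have -> : setT `*` (setT `\` b) = ~` (@setT X `*` b).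
          by apply/seteqP; split => -[x u] /=; tauto.
        exact: (saC sk).
      - move=> b hb /=.
        have -> : setT `*` (\bigcup_n b n) = \bigcup_n (@setT X `*` b n).
          apply/seteqP; split => -[x u] /=; first by move=> [_ [n _ h]]; exists n.
          by move=> [n _ [_ h]]; split => //; exists n.
        exact: (saUn sk).
    move=> b /GBkb [m _ <-] /=; apply: sub_sigma_algebra; exists m.*2.+1 => //.
    by rewrite /k /= odd_double /= uphalf_double.
  apply: smallest_sub => // _ [A1 [F1 [hA hF ->]]].
  have -> : A1 `*` F1 = (A1 `*` setT) `&` (setT `*` F1).
    by apply/seteqP; split => -[x u] /=; tauto.
  apply: (saI sk); [exact: L1|exact: L2].
have [cX [AX hX]] := analytic_code _ _ _ aM.
have [cU [AU hU]] := analytic_code _ _ _ aU.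
have [APhi hPhi] := prod_code _ _ _ _ AX AU hX hU.
have HMU : H `<=` prod_sigma M UU.
  by move=> W [hW _]; exact: (prod_sigma_mono _ _ _ _ AM FU _ hW).
have KMU : K `<=` prod_sigma M UU by move=> W /KH; exact: HMU.
move=> E HEE; rewrite KE; apply: blackwell APhi _ _ _.
- move=> n; apply: hPhi; apply: KMU; rewrite KE; apply: sub_sigma_algebra; by exists n.
- exact: hPhi (HMU _ HEE).
move=> y y' hyy Ey.
pose At := [set z | forall n, hk n z <-> hk n y].
have HAt : H At.
  have -> : At = \bigcap_n (if `[< hk n y >] then hk n else ~` hk n).
    apply/seteqP; split => z /=.
      move=> h n _; case: asboolP => hy; first by apply/h.
      by move=> hz; apply: hy; apply/h.
    move=> h n; have := h n I; case: asboolP => hy; first by split.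
    by move=> hz; split => // /hz.
  apply: (saIn sH) => n; case: asboolP => _; first exact: hkH.
  exact: (saC sH).
have atomAt : is_atom H At.
  split => //; first by exists y.
  move=> B HB BAt; have [[y1 By1]|nB] := pselect (B !=set0); last first.
    by left; apply/seteqP; split => // z Bz; apply: nB; exists z.
  right; apply/seteqP; split => // z Atz.
  have HB' : <<s range hk >> B by rewrite -HE.
  have h1 : At y1 := BAt _ By1.
  have hsat := gen_sat _ _ HB' y1 z; apply/(hsat _).1 => // n.
  by have := h1 n; have := Atz n; tauto.
have KAt : K At.
  have [B0 [D0 AtE]] := hat At atomAt.
  have Aty : At y by [].
  have -> : At = [set x | At (x, y.2)] `*` [set u | At (y.1, u)].
    move: Aty; rewrite AtE => -[b1 d1].
    by apply/seteqP; split => -[x u] /=; tauto.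
  apply: sub_sigma_algebra; exists [set x | At (x, y.2)], [set u | At (y.1, u)].
  split => //.
    exact: (sec1 _ _ sA _ (proj1 HAt) y.2).
  split; [exact: (sec2 _ _ sF _ (proj1 HAt) y.1)|exact: (sec2 _ _ sG _ (proj2 HAt) y.1)].
have Aty' : At y'.
  have KAt' : <<s range k >> At by rewrite -KE.
  by have := gen_sat _ _ KAt' y y' hyy; case=> + _; apply.
have HEE' : <<s range hk >> E by rewrite -HE.
have hsat := gen_sat _ _ HEE' y y'; apply/(hsat _).1 => // n.
by have := Aty' n; tauto.
Qed.
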